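(* Let $n \ge 2$ and $0 \le s \le 2n-2$. The number of Dyck paths of semilength $n$ in which the sum of the heights of the first peak and the last peak equals $s$ is \[ \sum_{j=1}^{\lfloor s/2\rfloor} (-1)^{j-1}\, j \binom{s-j}{j} C_{n-1-j}, \] where $C_r = \frac{1}{r+1}\binom{2r}{r}$ is the $r$-th Catalan number.
   Context: A Dyck path of semilength $n$ is a lattice path from $(0,0)$ to $(2n,0)$ with steps $U=(1,1)$ and $D=(1,-1)$ never going below the $x$-axis. A peak is an up-step immediately followed by a down-step; its height is the $y$-coordinate at the end of its up-step. If the path has only one peak, that peak is both the first and the last peak. *)

(* Defs.v *)
From mathcomp Require Import all_boot all_order all_algebra.
Set Implicit Arguments. Unset Strict Implicit. Unset Printing Implicit Defensive.

(* A lattice path is a sequence of steps: true = U = (1,1), false = D = (1,-1). *)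

(* height after the first k steps (meaningful when it is >= 0) *)
Definition height (p : seq bool) (k : nat) : nat :=
  count id (take k p) - count negb (take k p).

Definition dyck (n : nat) (p : seq bool) : bool :=
  [&& size p == 2 * n,
      all (fun k => count negb (take k p) <= count id (take k p)) (iota 0 (size p).+1)
    & count id p == count negb p].

Definition peaks (p : seq bool) : seq nat :=
  [seq i <- iota 0 (size p).-1 | nth false p i && ~~ nth false p i.+1].

(* height of a peak at position i = y-coordinate at the end of its up-step *)
Definition first_peak_height (p : seq bool) : nat := height p (head 0 (peaks p)).+1.
Definition last_peak_height (p : seq bool) : nat := height p (last 0 (peaks p)).+1.

Definition catalan (r : nat) : nat := 'C(r.*2, r) %/ r.+1.

(* Main.v *)
Require Import Defs.
From mathcomp Require Import all_boot all_order all_algebra.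
From mathcomp Require Import zify ring.
Set Implicit Arguments. Unset Strict Implicit. Unset Printing Implicit Defensive.

Fixpoint allseq (n : nat) : seq (seq bool) :=
  if n is n'.+1 then [seq true :: s | s <- allseq n'] ++ [seq false :: s | s <- allseq n']
  else [:: [::]].

Lemma cons_inj (b : bool) : injective (cons b).
Proof. by move=> x y []. Qed.

Lemma mem_allseq n s : (s \in allseq n) = (size s == n).
Proof.
elim: n s => [|n IH] [|b s] //=.
- rewrite mem_cat; apply/negbTE/norP; split; apply/mapP => -[? _] //.
- rewrite mem_cat eqSS -IH; case: b.
  + rewrite (mem_map (@cons_inj true)); case: (s \in allseq n) => //=.
    by apply/mapP => -[? _].
  + rewrite (mem_map (@cons_inj false)) orbC; case: (s \in allseq n) => //=.
    by apply/mapP => -[? _].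
Qed.

Lemma uniq_allseq n : uniq (allseq n).
Proof.
elim: n => [|n IH] //=; rewrite cat_uniq !(map_inj_uniq (@cons_inj _)) IH /= andbT.
by apply/hasPn => x /mapP [y _ ->]; apply/mapP => -[].
Qed.

Lemma perm_allseq l n : uniq l -> (forall s, (s \in l) = (size s == n)) ->
  perm_eq l (allseq n).
Proof.
move=> ul hl; apply: uniq_perm => // [|s]; first exact: uniq_allseq.
by rewrite hl mem_allseq.
Qed.

Lemma count_perm_allseq (P : pred (seq bool)) l n : uniq l ->
  (forall s, (s \in l) = (size s == n)) -> count P l = count P (allseq n).
Proof. by move=> ul hl; apply/permP/perm_allseq. Qed.

Lemma card_allseq n (P : pred (seq bool)) :
  #|[set t : n.-tuple bool | P t]| = count P (allseq n).
Proof.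
rewrite cardsE cardE /enum_mem size_filter.
rewrite -(count_perm_allseq P (l := map val (Finite.enum (n.-tuple bool)))).
- by rewrite count_map.
- rewrite (map_inj_uniq val_inj); by rewrite -enumT enum_uniq.
- move=> s; apply/mapP/idP => [[t _ ->]|/eqP hs]; first by rewrite size_tuple.
  by exists (Tuple (introT eqP hs)) => //; rewrite -enumT mem_enum.
Qed.


Fixpoint pth (h k : nat) (q : seq bool) : bool :=
  match q with
  | [::] => h == k
  | true :: q' => pth h.+1 k q'
  | false :: q' => (0 < h) && pth h.-1 k q'
  end.

Definition M h k L := count (pth h k) (allseq L).

Lemma M_S h k L : M h k L.+1 = M h.+1 k L + (if 0 < h then M h.-1 k L else 0).
Proof.
rewrite /M /= count_cat !count_map; congr (_ + _).
case: h => [|h] /=; last by apply: eq_count.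
by rewrite (eq_count (a2 := pred0)) ?count_pred0.
Qed.

Lemma pth_rcons h k q b :
  pth h k (rcons q b) = if b then (0 < k) && pth h k.-1 q else pth h k.+1 q.
Proof.
elim: q h => [|[] q IH] h /=.
- by case: b; case: k => [|k]; case: h => [|h] //=; rewrite ?andbF.
- by rewrite IH.
- by rewrite IH; clear IH; case: b; case: h => [|h'] //=; rewrite ?andbF ?andbT.
Qed.

Lemma pth_le h k q : pth h k q -> k <= h + size q.
Proof.
elim: q h => [|[] q IH] h /=; first by move/eqP->; rewrite addn0.
- by move/IH; rewrite addSnnS.
- by case: h => // h /= /IH; lia.
Qed.

Lemma M_small h k L : h + L < k -> M h k L = 0.
Proof.
move=> hk; rewrite /M; apply/eqP; rewrite -leqn0 leqNgt -has_count; apply/hasPn => q.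
rewrite mem_allseq => /eqP hq; apply/negP => /pth_le; rewrite hq; lia.
Qed.

Lemma M_Sr h k L : M h k L.+1 = (if 0 < k then M h k.-1 L else 0) + M h k.+1 L.
Proof.
rewrite /M -(count_perm_allseq (pth h k) (n := L.+1)
  (l := [seq rcons s true | s <- allseq L] ++ [seq rcons s false | s <- allseq L])).
- rewrite count_cat !count_map; congr (_ + _).
  + case: k => [|k] /=; first by rewrite (eq_count (a2 := pred0)) ?count_pred0 // => x /=; rewrite pth_rcons.
    by apply: eq_count => x /=; rewrite pth_rcons.
  + by apply: eq_count => x /=; rewrite pth_rcons.
- have rinj (b : bool) : injective (rcons^~ b) by move=> x y /rcons_inj [].
  rewrite cat_uniq !(map_inj_uniq (rinj _)) uniq_allseq /= andbT.
  apply/hasPn => x /mapP [y _ ->]; apply/mapP => -[z _ /rcons_inj []] //.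
- move=> s; rewrite mem_cat; apply/orP/idP.
  + by case=> /mapP [y]; rewrite mem_allseq => /eqP hy ->; rewrite size_rcons hy.
  + case/lastP: s => [|s b]; first by rewrite /=.
    rewrite size_rcons eqSS -mem_allseq => hs.
    by case: b; [left|right]; apply/mapP; exists s.
Qed.


Lemma ballot L : forall d k, d.*2 + k = L ->
  M 0 k L + (if d is d'.+1 then 'C(L, d') else 0) = 'C(L, d).
Proof.
elim: L => [|L IH] d k hL.
  by case: d hL => [|d]; case: k => // _; rewrite /M.
case: k hL => [|k] hL.
- case: d hL => [|d'] hL; first by [].
  rewrite M_Sr /= add0n.
  have h1 : d'.*2 + 1 = L by move: hL; rewrite doubleS; lia.
  have := IH d' 1 h1.
  rewrite binS.
  have e : L - d' = d'.+1 by lia.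
  have -> : 'C(L, d'.+1) = 'C(L, d') by rewrite -e bin_sub //; lia.
  case: d' {hL h1 e} => [|d''] /=.
    by rewrite !bin0 addn0 => ->.
  rewrite binS => hh.
  lia.
- rewrite M_Sr /=.
  have h1 : d.*2 + k = L by lia.
  have := IH d k h1.
  case: d hL h1 => [|d'] hL h1.
    rewrite (@M_small 0 k.+2 L) /=; last by move: hL; rewrite double0; lia.
    by rewrite !bin0 !addn0 => ->.
  have h2 : d'.*2 + k.+2 = L by move: h1; rewrite doubleS; lia.
  have := IH d' k.+2 h2.
  rewrite binS.
  case: d' {hL h1 h2} => [|d''] /=.
    by rewrite !bin0 !addn0 => -> ->.
  rewrite binS => hh1 hh2.
  lia.
Qed.

Lemma catalanE r : catalan r = M 0 0 r.*2.
Proof.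
have := ballot (d := r) (k := 0) (L := r.*2) (addn0 _).
rewrite /catalan; case: r => [|r] /=; first by rewrite /M.
set X := 'C(_, r.+1); set Y := 'C(_, r); set m := M _ _ _.
move=> h.
have h2 := mul_bin_left r.+1.*2 r.
have e : r.+1.*2 - r = r.+2 by rewrite doubleS; lia.
rewrite e -/X -/Y in h2.
have e1 : r.+2 * X = X + r.+1 * X by rewrite mulSn.
rewrite h2 -h mulnDr in e1.
move/addIn: e1 => e2.
by rewrite -h -e2 mulKn.
Qed.


Lemma pth_prefix h q : pth h 0 q =
  all (fun k => count negb (take k q) <= h + count id (take k q)) (iota 0 (size q).+1)
  && (h + count id q == count negb q).
Proof.
elim: q h => [|b q IH] h; first by rewrite /= addn0.
have -> : iota 0 (size (b :: q)).+1 = 0 :: map (addn 1) (iota 0 (size q).+1).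
  by rewrite -iotaDl.
have I0 : 0 \in iota 0 (size q).+1 by [].
move: (iota 0 (size q).+1) IH I0 => I IH I0.
rewrite /= all_map.
case: b; rewrite /= ?IH.
- congr andb; last by apply/eqP/eqP; lia.
  by apply: eq_all => k; rewrite /preim /= add1n /= !add0n addnS.
- case: h => [|h] /=.
  + by symmetry; apply/negbTE/nandP; left; apply/allPn; exists 0 => //=; rewrite !add0n take0.
  + have E (a b c d : bool) : a = c -> b = d -> a && b = c && d by move=> -> ->.
    apply: E; last by apply/eqP/eqP; lia.
    by apply: eq_all => k; rewrite /preim /= add1n /= !add0n addSn ltnS.
Qed.

Lemma dyckE n p : dyck n p = (size p == 2 * n) && pth 0 0 p.
Proof.
rewrite /dyck pth_prefix add0n; congr andb.
Qed.

Lemma fph_lead a r : first_peak_height (nseq a.+1 true ++ false :: r) = a.+1.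
Proof.
set p := _ ++ _.
have np i : nth false p i = if i < a.+1 then true else nth false (false :: r) (i - a.+1).
  by rewrite /p nth_cat size_nseq; case: ifP => // h; rewrite nth_nseq h.
rewrite /first_peak_height.
have hh : height p a.+1 = a.+1.
  by rewrite /height /p take_size_cat ?size_nseq // !count_nseq /=; lia.
have sp : (size p).-1 = a + (size r).+1 by rewrite /p size_cat size_nseq.
clearbody p.
rewrite /peaks sp (iotaD 0 a (size r).+1) filter_cat add0n.
rewrite (_ : filter _ (iota 0 a) = [::]); last first.
  apply/eqP; rewrite -(negbK (_ == _)) -has_filter; apply/hasPn => i.
  rewrite mem_iota add0n => /andP [_ hi]; rewrite !np ifT ?ifT //; lia.
by rewrite /= np ltnSn np ltnn subnn /=.
Qed.

Lemma lph_trail r b p : p = r ++ true :: nseq b.+1 false ->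
  count id p = count negb p -> last_peak_height p = b.+1.
Proof.
move=> hp hc.
have np i : nth false p i = if i < size r then nth false r i
   else nth false (true :: nseq b.+1 false) (i - size r).
  by rewrite hp nth_cat.
rewrite /last_peak_height.
have hh : height p (size r).+1 = b.+1.
  move: hc; rewrite /height hp take_cat ltnNge leqnSn /= subSnn /= !count_cat /= !count_nseq /=.
  lia.
have sp : (size p).-1 = size r + b.+1 by rewrite hp size_cat /= size_nseq addnS.
rewrite /peaks sp (iotaD 0 (size r) b.+1) filter_cat add0n /=.
rewrite (_ : filter _ (iota (size r).+1 b) = [::]); last first.
  apply/eqP; rewrite -(negbK (_ == _)) -has_filter; apply/hasPn => i.
  rewrite mem_iota => /andP [hi _]; rewrite np ifF; last by lia.
  rewrite (_ : i - size r = (i - (size r).+1).+1) /=; last by lia.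
  by case: (i - _) => [|j] //=; rewrite nth_nseq if_same.
rewrite (np (size r)) (np (size r).+1) ltnn subnn ltnNge leqnSn /= subSnn /= last_cat /=. exact: hh.
Qed.


Lemma split_lead p : has negb p -> exists a r, p = nseq a true ++ false :: r.
Proof.
elim: p => [|[] p IH] //=.
- by move/IH => [a [r ->]]; exists a.+1, r.
- by move=> _; exists 0, p.
Qed.

Lemma split_trail p : has id p -> exists r b, p = r ++ true :: nseq b false.
Proof.
elim/last_ind: p => [|p x IH] //.
rewrite -cats1 has_cat /= orbF; case: x => [_|].
- by exists p, 0; rewrite cats1.
- rewrite orbF => /IH [r [b ->]].
  exists r, b.+1; rewrite -catA /=.
  by rewrite (_ : nseq b false ++ [:: false] = nseq b.+1 false) // -addn1 nseqD.
Qed.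

Lemma pth_nseq_true h k a q : pth h k (nseq a true ++ q) = pth (h + a) k q.
Proof. by elim: a h => [|a IH] h /=; rewrite ?addn0 // IH addnS. Qed.

Lemma pth_cat_nseq_false h k q b : pth h k (q ++ nseq b false) = pth h (k + b) q.
Proof.
elim: b k => [|b IH] k; first by rewrite cats0 addn0.
rewrite (_ : nseq b.+1 false = nseq b false ++ [:: false]); last by rewrite -addn1 nseqD.
by rewrite catA cats1 pth_rcons IH addSnnS.
Qed.

Definition g a b q := nseq a.+1 true ++ false :: q ++ true :: nseq b.+1 false.

Lemma pth_g a b q : pth 0 0 (g a b q) = pth a b q.
Proof.
have pf h k l : pth h.+1 k (false :: l) = pth h k l by [].
rewrite /g pth_nseq_true add0n -cat_rcons pf pth_cat_nseq_false add0n pth_rcons.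
by [].
Qed.

Lemma size_g a b q : size (g a b q) = a + b + size q + 4.
Proof. rewrite /g size_cat /= size_cat /= !size_nseq; lia. Qed.

Lemma g_inj a b : injective (g a b).
Proof.
have Hd q : take (size q) (drop a.+2 (g a b q)) = q.
  rewrite /g -cat1s catA drop_size_cat; last by rewrite size_cat size_nseq addn1.
  by rewrite take_size_cat.
move=> q1 q2 E.
have es : size q1 = size q2 by move: (congr1 size E); rewrite !size_g; lia.
by rewrite -(Hd q1) E es Hd.
Qed.

Lemma dyck_struct n p : dyck n p -> 0 < n ->
  [/\ count id p = count negb p, pth 0 0 p, size p = 2 * n,
      exists a r, p = nseq a.+1 true ++ false :: r &
      exists r b, p = r ++ true :: nseq b.+1 false].
Proof.
move=> hd n0.
have [hs hp] : size p = 2 * n /\ pth 0 0 p.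
  by move: hd; rewrite dyckE => /andP [/eqP -> ->].
have hc : count id p = count negb p by move: hd; rewrite /dyck => /and3P [_ _ /eqP].
have hsum : count id p + count negb p = size p.
  by rewrite -(count_predC id p); congr (_ + _); apply: eq_count.
split => //.
- have : has negb p by rewrite has_count; lia.
  move/split_lead => [[|a] [r E]]; first by move: hp; rewrite E.
  by exists a, r.
- have : has id p by rewrite has_count; lia.
  move/split_trail => [r [[|b] E]].
    by move: hp; rewrite E cats1 pth_rcons.
  by exists r, b.
Qed.

Lemma cut_mid (p x y u v : seq bool) : p = x ++ y -> p = u ++ v ->
  size x + size v <= size p -> p = x ++ take (size p - size x - size v) y ++ v.
Proof.
move=> E1 E2 hs.
have sy : size y = size p - size x by rewrite E1 size_cat addKn.
have su : size u = size p - size v by rewrite E2 size_cat addnK.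
have : drop (size u) p = v by rewrite E2 drop_size_cat.
rewrite {1}E1 drop_cat ifF; last by lia.
move=> hv.
have e : size u - size x = size p - size x - size v by lia.
rewrite e in hv.
set k := size p - size x - size v in hv *.
by rewrite -hv cat_take_drop.
Qed.

Lemma count_bij (P Q : pred (seq bool)) N L (f : seq bool -> seq bool) :
  injective f ->
  (forall q, size q = L -> Q q -> size (f q) = N /\ P (f q)) ->
  (forall p, size p = N -> P p -> exists q, [/\ size q = L, Q q & p = f q]) ->
  count P (allseq N) = count Q (allseq L).
Proof.
move=> finj H1 H2.
rewrite -!size_filter -(size_map f [seq x <- allseq L | Q x]); apply: perm_size; apply: uniq_perm.
- exact: (filter_uniq _ (uniq_allseq _)).
- rewrite (map_inj_uniq finj); exact: (filter_uniq _ (uniq_allseq _)).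
- move=> p; rewrite mem_filter mem_allseq; apply/andP/mapP.
  + case=> hP /eqP hs; have [q [hq hQ ->]] := H2 p hs hP.
    by exists q => //; rewrite mem_filter mem_allseq hQ hq eqxx.
  + case=> q; rewrite mem_filter mem_allseq => /andP [hQ /eqP hq] ->.
    by have [-> ?] := H1 q hq hQ; split.
Qed.

Lemma count_split (P : pred (seq bool)) (f : seq bool -> nat) l N :
  (forall p, p \in l -> P p -> f p < N) ->
  count P l = \sum_(0 <= i < N) count (fun p => P p && (f p == i)) l.
Proof.
elim: l => [|x l IH] H /=; first by rewrite big1.
rewrite big_split /= -IH; last by move=> p hp; apply: H; rewrite inE hp orbT.
congr (_ + _).
case hx: (P x) => /=; last by rewrite big1.
rewrite (bigD1_seq (f x)) /= ?iota_uniq //; last by rewrite mem_index_iota (H x) ?inE ?eqxx.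
by rewrite eqxx big1 // => i /negbTE; rewrite eq_sym => ->.
Qed.

Lemma A_decomp n s : 0 < n -> s <= 2 * n - 2 ->
  count (fun p => dyck n p && (first_peak_height p + last_peak_height p == s)) (allseq (2 * n))
  = \sum_(0 <= a < s.-1) M a (s - a - 2) (2 * n - s - 2).
Proof.
move=> n0 hs.
rewrite (count_split (f := fun p => (first_peak_height p).-1) (N := s.-1)); last first.
  move=> p _ /andP [hd /eqP hsum].
  have [hc hp sp [a [r E1]] [r' [b E2]]] := dyck_struct hd n0.
  have f1 : first_peak_height p = a.+1 by rewrite E1 fph_lead.
  by move: hsum; rewrite f1 (lph_trail E2 hc); lia.
apply: eq_big_nat => a /andP [_ ha].
apply: (count_bij (f := g a (s - a - 2))); first exact: g_inj.
- move=> q hq hQ.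
  have sg : size (g a (s - a - 2) q) = 2 * n by rewrite size_g hq; lia.
  have hd : dyck n (g a (s - a - 2) q) by rewrite dyckE sg eqxx pth_g.
  have [hc _ _ _ _] := dyck_struct hd n0.
  split => //; rewrite hd /=.
  rewrite {1}/g fph_lead (@lph_trail (nseq a.+1 true ++ false :: q) (s - a - 2)) //; last first.
    by rewrite /g -catA.
  apply/andP; split; apply/eqP; lia.
- move=> p hsp /andP [/andP [hd /eqP hsum] /eqP ha'].
  have [hc hp sp [a1 [r E1]] [r' [b1 E2]]] := dyck_struct hd n0.
  have ea : a1 = a by move: ha'; rewrite E1 fph_lead.
  have eb : b1 = s - a - 2.
    by move: hsum; rewrite {1}E1 fph_lead (lph_trail E2 hc); lia.
  subst a1 b1.
  have E1' : p = (nseq a.+1 true ++ [:: false]) ++ r by rewrite -catA.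
  have hle : size (nseq a.+1 true ++ [:: false]) + size (true :: nseq (s - a - 2).+1 false)
      <= size p by rewrite size_cat /= !size_nseq sp; lia.
  have E := cut_mid E1' E2 hle.
  set q := take _ r in E.
  have Eg : p = g a (s - a - 2) q by rewrite E /g -catA.
  exists q; split => //.
  + by move: sp; rewrite Eg size_g; lia.
  + by rewrite -pth_g -Eg.
Qed.

Definition A n s := count (fun p => dyck n p && (first_peak_height p + last_peak_height p == s))
  (allseq (2 * n)).
Definition R t L := \sum_(0 <= h < t.+1) M h (t - h) L.

Lemma R_rec t L : R t L.+1 + M 0 t.+1 L = R t.+1 L + (if t is t'.+1 then R t' L else 0).
Proof.
rewrite /R.
under eq_big_nat => h _ do rewrite M_S.
rewrite big_split /= [in RHS]big_nat_recl //= subn0.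
rewrite [X in _ + X + _]big_nat_recl //= add0n.
have -> : \sum_(0 <= i < t.+1) M i.+1 (t.+1 - i.+1) L = \sum_(0 <= i < t.+1) M i.+1 (t - i) L.
  by apply: eq_big_nat => i _; rewrite subSS.
case: t => [|t]; first by rewrite [X in _ + X + _]big_geq //; lia.
have -> : \sum_(0 <= i < t.+1) M i (t.+1 - i.+1) L = \sum_(0 <= i < t.+1) M i (t - i) L.
  by apply: eq_big_nat => i _; rewrite subSS.
lia.
Qed.

Lemma A_R n s : 0 < n -> 2 <= s -> s <= 2 * n - 2 -> A n s = R (s - 2) (2 * n - s - 2).
Proof.
move=> n0 s2 hs; rewrite /A A_decomp // /R.
rewrite (_ : s.-1 = (s - 2).+1); last by lia.
by apply: eq_big_nat => h _; congr M; lia.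
Qed.

Lemma A_small n s : 0 < n -> s <= 1 -> s <= 2 * n - 2 -> A n s = 0.
Proof.
move=> n0 s1 hs; rewrite /A A_decomp // big_geq //; lia.
Qed.

Lemma pas t j : 2 <= t -> 'C(t - j.+1, j.+1) = 'C(t - 1 - j.+1, j.+1) + 'C(t - 2 - j, j).
Proof.
move=> t2; case: (leqP (j.+2) t) => hj.
- rewrite (_ : t - j.+1 = (t - 1 - j.+1).+1); last by lia.
  by rewrite binS (_ : t - 1 - j.+1 = t - 2 - j) //; lia.
- rewrite (_ : t - j.+1 = 0); last by lia.
  rewrite (_ : t - 1 - j.+1 = 0); last by lia.
  rewrite (_ : t - 2 - j = 0); last by lia.
  by rewrite !bin0n; case: j hj => //; lia.
Qed.

Import GRing.Theory Num.Theory.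
Local Open Scope ring_scope.

Definition Fz n s : int := \sum_(1 <= j < (s %/ 2).+1)
   (-1) ^+ (j - 1) * (j * 'C(s - j, j) * catalan (n - 1 - j))%:Z.
Definition Gz m t : int := \sum_(0 <= j < m) (-1) ^+ j * ('C(t - j, j) * catalan (m - 1 - j))%:Z.

Lemma Gz_rec m t : (2 <= t)%N -> (2 <= m)%N -> Gz m t = Gz m (t - 1) - Gz (m - 1) (t - 2).
Proof.
case: m => [|m] // t2 m2.
have em : (m.+1 - 1 = m)%N by lia.
rewrite /Gz !em !big_nat_recl // !subn0 !bin0.
have -> : \sum_(0 <= i < m) (-1) ^+ i.+1 * ('C(t - i.+1, i.+1) * catalan (m - i.+1))%:Z
  = \sum_(0 <= i < m) (-1) ^+ i.+1 * ('C(t - 1 - i.+1, i.+1) * catalan (m - i.+1))%:Z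
  - \sum_(0 <= j < m) (-1) ^+ j * ('C(t - 2 - j, j) * catalan (m - 1 - j))%:Z.
  rewrite -sumrB; apply: eq_big_nat => j _.
  rewrite (_ : (m - j.+1 = m - 1 - j)%N); last by lia.
  rewrite pas // PoszM PoszD PoszM PoszM exprS; ring.
ring.
Qed.

Lemma FzE n s N : (s %/ 2 < N)%N -> Fz n s = \sum_(1 <= j < N)
   (-1) ^+ (j - 1) * (j * 'C(s - j, j) * catalan (n - 1 - j))%:Z.
Proof.
move=> hN; rewrite /Fz [RHS](big_cat_nat _ (n := (s %/ 2).+1)) //=.
rewrite [X in _ = _ + X]big1_seq ?addr0 // => j /andP [_]; rewrite mem_index_iota => /andP [hj _].
rewrite bin_small ?muln0 ?mul0n ?mulr0 //; lia.
Qed.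

Lemma sgn_shift (j : nat) (x : int) :
  (-1) ^+ (j - 1) * (j%:Z * x) = - ((-1) ^+ j * (j%:Z * x)).
Proof.
case: j => [|j]; first by rewrite !mul0r mulr0 oppr0.
rewrite subSS subn0 exprS; ring.
Qed.

Lemma Fz_rec n s : (2 <= s)%N -> (s <= 2 * n - 2)%N ->
  Fz n s = Fz n (s - 1) - Fz (n - 1) (s - 2) + Gz (n - 1) (s - 2).
Proof.
case: n => [|n] s2 hs; first by lia.
have en : (n.+1 - 1 = n)%N by lia.
rewrite en (FzE n.+1 (N := n.+1)); last by lia.
rewrite (FzE n.+1 (s := s - 1) (N := n.+1)); last by lia.
rewrite (FzE n (s := s - 2) (N := n)); last by lia.
have n1 : (0 < n)%N by lia.
have e3 (F : nat -> int) : F 0%N = 0 -> \sum_(1 <= j < n) F j = \sum_(0 <= j < n) F j.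
  by move=> F0; rewrite (big_ltn n1) F0 add0r.
rewrite [X in _ = _ - X + _]e3; last by rewrite mul0n mul0n mulr0.
rewrite !en !big_add1 /=.
rewrite /Gz -sumrB -big_split /=.
apply: eq_big_nat => j _.
rewrite (_ : (n - j.+1 = n - 1 - j)%N); last by lia.
rewrite (_ : (j.+1 - 1 = j)%N); last by lia.
rewrite pas // !PoszM PoszD.
case: j => [|j]; first by rewrite /= expr0; ring.
rewrite (_ : (j.+1 - 1 = j)%N); last by lia.
rewrite !exprS; ring.
Qed.

Lemma M0_Gz t : forall m, (1 <= m)%N -> (t <= 2 * m - 2)%N ->
  (M 0 t (2 * m - t - 2))%:Z = Gz m t.
Proof.
elim/ltn_ind: t => t IH m m1 ht.
case: m m1 ht => [|m] // _ ht.
have catm : (M 0 0 (2 * m) = catalan m)%N by rewrite catalanE -mul2n.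
case: t IH ht => [|[|t]] IH ht.
- rewrite /Gz big_nat_recl // big1 ?addr0 => [|j _]; last by rewrite bin0n mul0n mulr0.
  rewrite subn0 bin0 expr0 mul1r mul1n (_ : (m.+1 - 1 - 0 = m)%N); last by lia.
  by rewrite -catm (_ : (2 * m.+1 - 0 - 2 = 2 * m)%N) //; lia.
- case: m ht catm => [|m] ht catm; first by [].
  rewrite /Gz big_nat_recl // big1 ?addr0 => [|j _]; last first.
    by rewrite (_ : (1 - j.+1 = 0)%N) ?bin0n ?mul0n ?mulr0 //; lia.
  rewrite subn0 bin0 expr0 mul1r mul1n (_ : (m.+2 - 1 - 0 = m.+1)%N); last by lia.
  rewrite -catm; have := M_Sr 0 0 (2 * m.+2 - 1 - 2).
  rewrite /= add0n (_ : ((2 * m.+2 - 1 - 2).+1 = 2 * m.+1)%N); last by lia.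
  by move=> ->.
- have m2 : (2 <= m.+1)%N by lia.
  rewrite Gz_rec // subn1 /= (_ : (t.+2 - 2 = t)%N); last by lia.
  rewrite -IH // -1?IH //; try lia.
  set L := (2 * m.+1 - t.+2 - 2)%N.
  have e1 : (2 * m.+1 - t.+1 - 2 = L.+1)%N by rewrite /L; lia.
  have e2 : (2 * (m.+1 - 1) - t - 2 = L)%N by rewrite /L; lia.
  rewrite e1 e2 M_Sr /= PoszD; ring.
Qed.

Lemma recA n s : (0 < n)%N -> (2 <= s)%N -> (s <= 2 * n - 2)%N ->
  (A n s)%:Z = (A n (s - 1)%N)%:Z - (A (n - 1)%N (s - 2)%N)%:Z + (M 0 (s - 2)%N (2 * n - s - 2)%N)%:Z.
Proof.
move=> n0 s2 hs.
rewrite A_R //.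
case E: (s - 2)%N => [|t].
- rewrite /R big_nat1 subn0 (@A_small n) //; try lia.
  rewrite (@A_small (n - 1)%N) //; try lia.
- set L := (2 * n - s - 2)%N.
  have := R_rec t L.
  rewrite (A_R (s := (s - 1)%N)) //; try lia.
  rewrite (_ : (s - 1 - 2 = t)%N); last by lia.
  rewrite (_ : (2 * n - (s - 1) - 2 = L.+1)%N); last by rewrite /L; lia.
  case: t E => [|t] E.
  + by rewrite (@A_small (n - 1)%N) //; lia.
  + have -> : A (n - 1)%N t.+2 = R t L.
      rewrite -E A_R; try lia.
      by congr R; rewrite /L; lia.
    lia.
Qed.

Lemma A_Fz s : forall n, (1 <= n)%N -> (s <= 2 * n - 2)%N -> (A n s)%:Z = Fz n s.
Proof.
elim/ltn_ind: s => s IH n n1 hs.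
case: (leqP s 1) => s1.
- rewrite A_small // /Fz big_geq //.
  by rewrite divn_small //; lia.
- rewrite recA //; try lia.
  rewrite Fz_rec //; try lia.
  rewrite IH //; try lia.
  rewrite IH //; try lia.
  rewrite -M0_Gz; try lia.
  by rewrite (_ : (2 * (n - 1) - (s - 2) - 2 = 2 * n - s - 2)%N) //; lia.
Qed.

Local Close Scope ring_scope.
Unset Implicit Arguments.

Theorem proposition3p4 (n s : nat) (hn : 2 <= n) (hs : s <= 2 * n - 2) :
  (#|[set t : (2 * n).-tuple bool |
       dyck n t && (first_peak_height t + last_peak_height t == s)]|%:Z =
   \sum_(1 <= j < (s %/ 2).+1)
      (-1) ^+ (j - 1) * (j * 'C(s - j, j) * catalan (n - 1 - j))%:Z)%R.
Proof.
rewrite (card_allseq (2 * n) (fun p => dyck n p && (first_peak_height p + last_peak_height p == s))).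
by rewrite -/(A n s) A_Fz //; lia.
Qed.
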